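(* Let $k\ge 2$, let $H$ be a digraph (possibly with loops), and let $D$ be an $H$-colored local out-tournament. If every directed cycle in $D$ has $H$-length at most $k-2$, then $D$ has a $(k,H)$-kernel.
   Context: All digraphs are finite. A local out-tournament is a digraph $D$ such that for every vertex $x$, the subdigraph induced by the out-neighbourhood $N^+(x)$ is a tournament (every two distinct vertices joined by exactly one arc). $D$ has no loops and comes with a map $\rho: A(D)\to V(H)$. For a walk $W=(x_0,\ldots,x_n)$ in $D$, there is an obstruction on $x_i$ if $(\rho(x_{i-1},x_i),\rho(x_i,x_{i+1})) \notin A(H)$; for an open walk this is considered at internal vertices $x_i$, $1\le i\le n-1$, for a closed walk (such as a cycle) at all $i\in\{0,\ldots,n-1\}$ with indices modulo $n$. $O_H(W)$ is the set of indices with an obstruction; the $H$-length is $l_H(W)=|O_H(W)|+1$ for open $W$ and $|O_H(W)|$ for closed $W$. A $(k,H)$-kernel ($k\ge2$) is a set $S\subseteq V(D)$ such that for every two distinct $u,v\in S$ every directed $uv$-path in $D$ has $H$-length at least $k$, and for every $x\in V(D)\setminus S$ there is a directed path from $x$ to a vertex of $S$ of $H$-length at most $k-1$. *)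

(* Defs.v *)
From mathcomp Require Import all_boot.
Set Implicit Arguments. Unset Strict Implicit. Unset Printing Implicit Defensive.

(* D : vertex type V (finite), arc relation a : rel V.
   H : vertex type W (finite), arc relation h : rel W (loops allowed).
   rho : V -> V -> W is the arc colouring (only its values on arcs matter). *)

Section Kernels.
Variables (V W : finType) (a : rel V) (h : rel W) (rho : V -> V -> W).

Fixpoint obs (x y : V) (s : seq V) : nat :=
  match s with
  | [::] => 0
  | z :: s' => (~~ h (rho x y) (rho y z)) + obs y z s'
  end.

Definition hlen_open (x : V) (p : seq V) : nat :=
  match p with
  | [::] => 0
  | y :: s => obs x y s
  end + 1.

(* H-length of the closed walk x0, x1, ..., x_{n-1}, x0 given by c = x0 :: s:
   obstructions counted at all n positions (indices mod n) *)
Definition hlen_cycle (c : seq V) : nat :=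
  match c with
  | [::] => 0
  | x0 :: s => obs (last x0 s) x0 (rcons s x0)
  end.

Definition dpath (x : V) (p : seq V) : bool := path a x p && uniq (x :: p).

Definition dcycle (c : seq V) : bool := [&& cycle a c, uniq c & 1 < size c].

Definition local_out_tournament : Prop :=
  forall x u v, a x u -> a x v -> u != v -> (a u v (+) a v u) = true.

Definition kH_kernel (k : nat) (S : {set V}) : Prop :=
  (forall u v, u \in S -> v \in S -> u != v ->
     forall p, dpath u p -> last u p = v -> k <= hlen_open u p)
  /\ (forall x, x \notin S ->
     exists p, [/\ dpath x p, last x p \in S & hlen_open x p <= k.-1]).

End Kernels.

(* Main.v *)
Require Import Defs.
From mathcomp Require Import all_boot zify.
From Stdlib Require Import Classical.

Section S.
Variables (V : finType) (a : rel V).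

Lemma cover_next (c : seq V) (c0 : V) (P : V -> Prop) :
  uniq c -> c0 \in c -> P c0 -> (forall z, z \in c -> P z -> P (next c z)) ->
  forall z, z \in c -> P z.
Proof.
move=> Uc c0c Pc0 Hn.
case: (rot_to c0c) => i s Ed.
have Ud : uniq (c0 :: s) by rewrite -Ed rot_uniq.
have Nd : forall y, next (c0 :: s) y = next c y by move=> y; rewrite -Ed next_rot.
have Md : forall y, (y \in c0 :: s) = (y \in c) by move=> y; rewrite -Ed mem_rot.
have key : forall j, j <= size s -> P (nth c0 (c0 :: s) j).
  elim=> [|j IH] Hj //=.
  have Hj' : j < size (c0 :: s) by rewrite /= ltnS ltnW.
  have yin : nth c0 (c0 :: s) j \in c0 :: s by apply: mem_nth.
  have yc : nth c0 (c0 :: s) j \in c by rewrite -Md.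
  have := Hn _ yc (IH (ltnW Hj)).
  by rewrite -Nd next_nth yin index_uniq.
move=> z zc; rewrite -Md in zc.
rewrite -(nth_index c0 zc); apply: key.
by have := index_mem z (c0 :: s); rewrite zc /= ltnS => ->.
Qed.

Lemma splice c z x q : dcycle a c -> z \in c -> a z x -> path a x q ->
  a (last x q) (next c z) -> uniq (x :: q) -> (forall y, y \in x :: q -> y \notin c) ->
  exists c', [/\ dcycle a c', {subset c <= c'} & x \in c'].
Proof.
move=> /and3P[Cc Uc Sc] zc azx pxq alast Uq Dq.
case: (rot_to zc) => i s Ed.
have Cd : cycle a (z :: s) by rewrite -Ed rot_cycle.
have Ud : uniq (z :: s) by rewrite -Ed rot_uniq.
have Md : forall y, (y \in z :: s) = (y \in c) by move=> y; rewrite -Ed mem_rot.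
have Sd : 1 < size (z :: s) by rewrite -Ed size_rot.
case: s Ed Cd Ud Md Sd => [|w t] Ed Cd Ud Md Sd //.
have Nw : next c z = w.
  by rewrite -(next_rot i Uc) Ed next_nth mem_head /= eqxx.
rewrite Nw in alast.
exists (z :: x :: q ++ w :: t); split.
- apply/and3P; split => //.
  + move: Cd; rewrite /cycle /= => /andP[_ pw].
    by rewrite azx rcons_cat cat_path pxq /= alast.
  + rewrite -[z :: _]/([:: z] ++ (x :: q) ++ (w :: t)).
    rewrite (perm_uniq (permEl (perm_catCA [:: z] (x :: q) (w :: t)))) cat_uniq Uq.
    rewrite andTb; apply/andP; split; last exact: Ud.
    apply/hasPn => y yd; apply/negP => yq; move: (Dq y yq); rewrite -Md.
    by move: yd; rewrite /= !inE => ->.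
- move=> y; rewrite -Md !inE mem_cat !inE.
  by case/or3P=> ->; rewrite ?orbT.
- by rewrite !inE eqxx orbT.
Qed.

Lemma first_hit (c : seq V) : forall p x, path a x p -> x \notin c -> last x p \in c ->
  uniq (x :: p) -> exists q c1, [/\ path a x q, a (last x q) c1, c1 \in c,
     uniq (x :: q) & {subset q <= p} /\ forall y, y \in x :: q -> y \notin c].
Proof.
elim=> [|y p IH] x /=; first by move=> _ /negbTE ->.
move=> /andP[axy pyp] xc lc /andP[xn Uyp].
case yc: (y \in c).
  exists [::], y; split => //=.
  by split=> // y0; rewrite inE => /eqP ->.
have [q [c1 [pq aq c1c Uq [sq nq]]]] := IH y pyp (negbT yc) lc Uyp.
exists (y :: q), c1; split => //=.
- by rewrite axy.
- rewrite -/(uniq (y :: q)) Uq andbT; apply/negP => /orP[]; first by move=> /eqP xy; rewrite xy inE eqxx in xn.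
  by move=> /sq xp; rewrite inE xp orbT in xn.
- split; first by move=> y0; rewrite !inE => /orP[-> //|/sq ->]; rewrite orbT.
  by move=> y0; rewrite inE => /orP[/eqP -> //|]; apply: nq.
Qed.

Lemma exit_cycle (c : seq V) : forall p u, path a u p -> u \in c -> last u p \notin c ->
  exists c0 x, [/\ c0 \in c, x \notin c, a c0 x & connect a x (last u p)].
Proof.
elim=> [|y p IH] u /=; first by move=> _ ->.
move=> /andP[auy pyp] uc lc.
case yc: (y \in c); first exact: IH.
exists u, y; split => //; first by rewrite yc.
by apply/connectP; exists p.
Qed.

Hypothesis lot : local_out_tournament a.
Hypothesis irr : irreflexive a.

Lemma extend c x u c0 : dcycle a c -> c0 \in c -> a c0 x -> x \notin c -> u \in c ->
  connect a x u -> exists c', [/\ dcycle a c', {subset c <= c'} & x \in c'].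
Proof.
move=> dc c0c ac0x xc uc cxu.
have /and3P[Cc Uc Sc] := dc.
case: (boolP (has (fun z => a z x && a x (next c z)) c)).
  move=> /hasP[z zc /andP[azx axn]].
  apply: (@splice c z x [::] dc zc azx isT axn) => // y; rewrite inE => /eqP -> //.
move=> /hasPn Hn.
have dom : forall z, z \in c -> a z x.
  apply: (@cover_next c c0 (fun z => a z x) Uc c0c ac0x) => z zc azx.
  have azn := next_cycle Cc zc.
  have nx : next c z != x.
    by apply/eqP => E; move: xc; rewrite -E mem_next zc.
  have := lot _ _ _ azn azx nx.
  have := Hn z zc; rewrite /= azx /= => /negbTE ->.
  by rewrite addbF.
case/connectP: cxu => p px Eu; rewrite Eu in uc.
case: (shortenP px) uc => p' pp' Up' _ uc.
have [q [c1 [pq aq c1c Uq [_ nq]]]] := @first_hit c _ _ pp' xc uc Up'.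
have zc : prev c c1 \in c by rewrite mem_prev.
apply: (@splice c (prev c c1) x q dc zc (dom _ zc) pq _ Uq nq).
by rewrite next_prev.
Qed.

Lemma base_cycle u v : u != v -> connect a u v -> connect a v u ->
  exists c, dcycle a c /\ u \in c.
Proof.
move=> uv /connectP[p pp lp] cvu.
case: p pp lp => [|w p] /=; first by move=> _ E; rewrite E eqxx in uv.
move=> /andP[auw pwp] lp.
have : connect a w u.
  apply: connect_trans cvu; apply/connectP; exists p => //.
case/connectP=> q pq lq.
case: (shortenP pq) lq => q' pq' Uq' _ lq.
exists (w :: q'); split.
  apply/and3P; split => //.
  - by rewrite /cycle rcons_path pq' -lq auw.
  - case: q' {pq' Uq'} lq => [|y q'] //= E.
    by move: auw; rewrite E irr.
by rewrite lq mem_last.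
Qed.

Lemma grow u v : u != v -> connect a u v -> connect a v u ->
  forall n c, dcycle a c -> u \in c -> #|V| - size c <= n ->
  exists c', [/\ dcycle a c', u \in c' & v \in c'].
Proof.
move=> uv cuv cvu; elim=> [|n IH] c dc uc hn.
all: case vc: (v \in c); first by exists c.
all: case/connectP: (cuv) => p pp lp.
all: rewrite lp in vc.
all: have [c0 [x [c0c xc ac0x cxv]]] := @exit_cycle c _ _ pp uc (negbT vc).
all: rewrite -lp in cxv.
all: have [c' [dc' sc' xc']] := extend c x u c0 dc c0c ac0x xc uc (connect_trans cxv cvu).
all: have /and3P[_ Uc _] := dc.
all: have /and3P[_ Uc' _] := dc'.
all: have le1 : size (x :: c) <= size c'.
all: try (apply: uniq_leq_size => [|y]; [by rewrite /= xc Uc | by rewrite inE => /orP[/eqP ->|/sc']]).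
all: have le2 : size c' <= #|V| by rewrite -(card_uniqP Uc') max_card.
- by move: le1 le2 hn => /= le1 le2 hn; clear -le1 le2 hn; lia.
- apply: (IH c') => //; first exact: sc'.
  by move: le1 le2 hn => /= le1 le2 hn; clear -le1 le2 hn; lia.
Qed.

Lemma cycle_through u v : u != v -> connect a u v -> connect a v u ->
  exists c, [/\ dcycle a c, u \in c & v \in c].
Proof.
move=> uv cuv cvu.
have [c [dc uc]] := base_cycle u v uv cuv cvu.
exact: (grow u v uv cuv cvu _ c dc uc (leqnn _)).
Qed.

End S.

Lemma kernel_exists (T : finType) (g : T -> T -> Prop) (r : T -> nat) :
  (forall u v, g u v -> r v < r u \/ g v u) ->
  exists S : {set T}, (forall u v, u \in S -> v \in S -> u != v -> ~ g u v) /\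
    (forall x, x \notin S -> exists2 y, y \in S & g x y).
Proof.
move=> Hg.
have main : forall n, n <= #|T| -> exists A S : {set T},
  [/\ #|A| = n, S \subset A, (forall x z, x \in A -> z \notin A -> r x <= r z),
      (forall u v, u \in S -> v \in S -> u != v -> ~ g u v) &
      (forall x, x \in A -> x \notin S -> exists2 y, y \in S & g x y)].
  elim=> [|n IH] Hn.
    exists set0, set0; split => //; by [rewrite cards0 | rewrite sub0set | move=> x; rewrite inE].
  have [A [S [cA sSA lA iS aS]]] := IH (ltnW Hn).
  have [y0 y0A] : exists y0, y0 \notin A.
    apply: NNPP => Hne.
    have : [set: T] \subset A.
      by apply/subsetP => y _; apply: NNPP => yA; apply: Hne; exists y; apply/negP.
    move/subset_leq_card; rewrite cardsT cA; lia.
  case: (@arg_minnP T y0 (fun y => y \notin A) r y0A) => y yA ymin.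
  have lA' : forall x z, x \in y |: A -> z \notin y |: A -> r x <= r z.
    move=> x z; rewrite !inE negb_or => /orP[/eqP ->|xA] /andP[_ zA].
      exact: ymin.
    exact: lA.
  have cA' : #|y |: A| = n.+1 by rewrite cardsU1 yA cA.
  case: (classic (exists2 s, s \in S & g y s)) => [Hy|Hy].
    exists (y |: A), S; split => //.
    - apply: subset_trans sSA _; exact: subsetU1.
    - move=> x; rewrite !inE => /orP[/eqP -> //|]; exact: aS.
  exists (y |: A), (y |: S); split => //.
  - by apply: setUS.
  - have nys : forall s, s \in S -> ~ g s y.
      move=> s sS gsy; case: (Hg _ _ gsy) => [lt|gys]; last by apply: Hy; exists s.
      have := lA s y (subsetP sSA _ sS) yA; lia.
    have nys' : forall s, s \in S -> ~ g y s by move=> s sS gys; apply: Hy; exists s.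
    move=> u v; rewrite !inE => /orP[/eqP ->|uS] /orP[/eqP ->|vS]; rewrite ?eqxx //.
    + by move=> _; apply: nys'.
    + by move=> _; apply: nys.
    + exact: iS.
  - move=> x; rewrite !inE negb_or => /orP[/eqP ->|xA] /andP[xy xS].
      by rewrite eqxx in xy.
    have [s sS gxs] := aS x xA xS.
    by exists s => //; rewrite inE sS orbT.
have [A [S [cA sSA lA iS aS]]] := main _ (leqnn _).
exists S; split => // x xS; apply: aS => //.
have : ~: A = set0 by apply: cards0_eq; have := cardsC A; rewrite cA; lia.
move/setP/(_ x); rewrite !inE => /negbFE; by [].
Qed.

Section Main.
Variables (V W : finType) (a : rel V) (h : rel W) (rho : V -> V -> W).

Lemma obs_cat : forall s t x y, obs h rho x y s <= obs h rho x y (s ++ t).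
Proof.
elim=> [|z s IH] t x y //=.
by rewrite leq_add2l.
Qed.

Lemma extract (k : nat) c u v : 2 <= k ->
  (forall c : seq V, dcycle a c -> hlen_cycle h rho c <= k - 2) ->
  dcycle a c -> u \in c -> v \in c -> u != v ->
  exists p, [/\ dpath a v p, last v p = u & hlen_open h rho v p <= k.-1].
Proof.
move=> k2 Hc dc uc vc uv.
case: (rot_to vc) => i s Ed.
have /and3P[Cc Uc Sc] := dc.
have dd : dcycle a (v :: s) by rewrite /dcycle -Ed rot_cycle rot_uniq size_rot Cc Uc Sc.
have Hd := Hc _ dd.
have /and3P[Cd Ud _] := dd.
have us : u \in s.
  by move: uc; rewrite -(mem_rot i) Ed inE (negbTE uv).
case/splitPr: us Hd Cd Ud => s1 s2 Hd Cd Ud.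
exists (rcons s1 u); split.
- apply/andP; split.
    move: Cd; rewrite /cycle rcons_cat /= cat_path rcons_path => /andP[-> /=].
    by case/andP.
  by move: Ud; rewrite -cat_rcons -cat_cons cat_uniq => /andP[].
- by rewrite last_rcons.
- move: Hd; rewrite /hlen_cycle /hlen_open rcons_cat rcons_cons -[s1 ++ u :: rcons s2 v]cat_rcons.
  case E: (rcons s1 u) => [|y t]; first by move: (size_rcons s1 u); rewrite E.
  rewrite /= => Hd.
  have := obs_cat t (rcons s2 v) v y.
  move: Hd; set A := obs _ _ _ _ (_ ++ _); set B := obs _ _ _ _ t.
  move=> Hd HB; clear -Hd HB k2; lia.
Qed.

End Main.

Theorem theorem28 (V W : finType) (a : rel V) (h : rel W) (rho : V -> V -> W)
    (k : nat) :
  2 <= k ->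
  irreflexive a ->
  local_out_tournament a ->
  (forall c : seq V, dcycle a c -> hlen_cycle h rho c <= k - 2) ->
  exists S : {set V}, kH_kernel a h rho k S.
Proof.
move=> k2 irr lot Hc.
pose g u v := exists p, [/\ dpath a u p, last u p = v & hlen_open h rho u p <= k.-1].
pose r x := #|[set y | connect a x y]|.
have gc : forall u v, g u v -> connect a u v.
  move=> u v [p [/andP[pp _] lp _]]; apply/connectP; exists p => //.
have Hg : forall u v, g u v -> r v < r u \/ g v u.
  move=> u v guv.
  have cuv := gc _ _ guv.
  have sub : [set y | connect a v y] \subset [set y | connect a u y].
    by apply/subsetP => y; rewrite !inE; apply: connect_trans.
  have le := subset_leq_card sub.
  case: (ltnP (r v) (r u)) => [lt|ge]; first by left.
  right.
  have eqc : r v = r u by apply/eqP; rewrite eqn_leq le ge.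
  have := subset_cardP eqc sub => /(_ u); rewrite !inE connect0 => cvu.
  case: (eqVneq u v) => [<-|uv]; first by exists [::]; split => //; rewrite /hlen_open; clear -k2; lia.
  have [c [dc uc vc]] := @cycle_through V a lot irr u v uv cuv cvu.
  exact: (@extract V W a h rho k c u v k2 Hc dc uc vc uv).
have [S [iS aS]] := @kernel_exists V g r Hg.
exists S; split.
- move=> u v uS vS uv p dp lp.
  rewrite leqNgt; apply/negP => lt; apply: (iS u v uS vS uv).
  exists p; split => //; lia.
- move=> x xS; have [y yS [p [dp lp hp]]] := aS x xS.
  by exists p; split => //; rewrite lp.
Qed.
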